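(* For every finite simple digraph $G$, ${\sf kw}(G) \leq {\sf circ}(G) + 1$, where ${\sf kw}(G)$ is the Kelly-width of $G$ and ${\sf circ}(G)$ is its circumference.
   Context: All digraphs are finite and simple (no loops, no multiple arcs). The circumference ${\sf circ}(G)$ of a digraph $G$ is the length (number of arcs) of a longest simple directed cycle in $G$; if $G$ is acyclic (a DAG), ${\sf circ}(G)$ is defined to be $1$. For a DAG $T$ and distinct nodes $i,j$, write $i\prec j$ if there is a directed walk in $T$ from $i$ to $j$, and $i\preceq j$ if $i=j$ or $i\prec j$; a root is a node with no incoming arcs, and the children of $i$ are the heads of arcs with tail $i$. Given sets $W_i$ for nodes $i$, let $W_{\succeq j}=\bigcup_{k\succeq j}W_k$. For $W,X\subseteq V(G)$, $X$ guards $W$ if $W\cap X=\emptyset$ and for every arc $(u,v)$ of $G$ with $u\in W$ we have $v\in W\cup X$. A Kelly-decomposition of $G$ is a triple $(T,(W_i)_{i\in V(T)},(X_i)_{i\in V(T)})$ where $T$ is a DAG and all $W_i,X_i\subseteq V(G)$, such that: (1) $(W_i)_i$ is a partition of $V(G)$; (2) for every node $i$, $X_i$ guards $W_{\succeq i}$; (3) for every node $i$, the children of $i$ can be enumerated as $j_1,\dots,j_s$ so that for each $q$, $X_{j_q}\subseteq W_i\cup X_i\cup\bigcup_{p<q}W_{\succeq j_p}$, and the roots of $T$ can be enumerated as $r_1,r_2,\dots$ so that for each $q$, $X_{r_q}\subseteq\bigcup_{p<q}W_{\succeq r_p}$. Its width is $\max_i|W_i\cup X_i|$, and the Kelly-width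 ${\sf kw}(G)$ is the minimum width of a Kelly-decomposition of $G$. *)

(* Defs.v *)
From mathcomp Require Import all_boot.
Set Implicit Arguments. Unset Strict Implicit. Unset Printing Implicit Defensive.

(* A finite simple digraph: vertex type V : finType, arc relation e : rel V,
   required irreflexive (no loops); a relation has no multiple arcs. *)

(* Lengths are bounded by #|V|. *)
Definition circ (V : finType) (e : rel V) : nat :=
  maxn 1 (\max_(k < #|V|.+1 | [exists t : k.-tuple V, uniq t && cycle e t]) k).

Definition dprec (I : finType) (a : rel I) (i j : I) : bool :=
  [exists k, a i k && connect a k j].
Definition dpreceq (I : finType) (a : rel I) (i j : I) : bool :=
  (i == j) || dprec a i j.

Definition is_dag (I : finType) (a : rel I) : Prop := forall i, ~~ dprec a i i.

Definition Wsucc (V I : finType) (a : rel I) (W : I -> {set V}) (j : I) : {set V} :=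
  \bigcup_(k | dpreceq a j k) W k.

Definition guards (V : finType) (e : rel V) (Wset X : {set V}) : Prop :=
  [disjoint Wset & X] /\
  forall u v, e u v -> u \in Wset -> v \in Wset :|: X.

Definition enumerates (I : finType) (s : seq I) (P : pred I) : Prop :=
  uniq s /\ forall j, (j \in s) = P j.

Definition is_root (I : finType) (a : rel I) (j : I) : bool := [forall k, ~~ a k j].

Definition KellyDecomposition (V : finType) (e : rel V)
    (I : finType) (a : rel I) (W X : I -> {set V}) : Prop :=
  [/\ is_dag a,
      (forall v, exists i, v \in W i) /\
      (forall i j v, v \in W i -> v \in W j -> i = j),
      (forall i, guards e (Wsucc a W i) (X i)),
      (forall i, exists s : seq I, enumerates s (a i) /\
         forall s1 j s2, s = s1 ++ j :: s2 ->
           X j \subset W i :|: X i :|: \bigcup_(p <- s1) Wsucc a W p)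
    &
      (exists s : seq I, enumerates s (is_root a) /\
         forall s1 j s2, s = s1 ++ j :: s2 ->
           X j \subset \bigcup_(p <- s1) Wsucc a W p)].

Definition decomp_width (V I : finType) (W X : I -> {set V}) : nat :=
  \max_(i : I) #|W i :|: X i|.

(* kw(G) <= k  iff some Kelly-decomposition of G has width <= k
   (kw is the minimum width over all Kelly-decompositions). *)
Definition kw_le (V : finType) (e : rel V) (k : nat) : Prop :=
  exists (I : finType) (a : rel I) (W X : I -> {set V}),
    KellyDecomposition e a W X /\ decomp_width W X <= k.

(* Main.v *)
Require Import Defs.
From mathcomp Require Import all_boot zify.
Set Implicit Arguments. Unset Strict Implicit. Unset Printing Implicit Defensive.

Definition lerel (V : finType) (e : rel V) (s : seq V) (v : V) : rel V :=
  fun y z => e y z && (index z s <= index v s).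

Definition Xs (V : finType) (e : rel V) (s : seq V) (v : V) : {set V} :=
  [set x | (x \in s) && (index v s < index x s) &&
           [exists w, connect (lerel e s v) v w && e w x]].

Lemma conn_inv (V : finType) (r : rel V) (P : pred V) :
  (forall y z, P y -> r y z -> P z) -> forall x y, P x -> connect r x y -> P y.
Proof.
move=> H x y Px /connectP [p pth ->].
elim: p x Px pth => //= z p IH x Px /andP[rxz pth]; exact: IH (H _ _ Px rxz) pth.
Qed.

Lemma lerel_idx (V : finType) (e : rel V) s v w :
  connect (lerel e s v) v w -> index w s <= index v s.
Proof.
move=> c; apply: (@conn_inv _ _ (fun w => index w s <= index v s) _ v) c => //.
by move=> y z _ /andP[].
Qed.

Lemma path_idx (V : finType) (e : rel V) s v y p :
  path (lerel e s v) y p -> forall z, z \in p -> index z s <= index v s.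
Proof.
elim: p y => //= a p IH y /andP[/andP[_ ha] pth] z; rewrite inE => /orP[/eqP->//|].
exact: IH pth z.
Qed.

Lemma path_restrict (V : finType) (r : rel V) (P : pred V) x p :
  path r x p -> all P p -> path [rel a b | r a b && P b] x p.
Proof.
elim: p x => //= a p IH x /andP[rxa pth] /andP[Pa allp].
by rewrite rxa Pa /= IH.
Qed.

Lemma path_suffix (V : finType) (r : rel V) x p y :
  path r x p -> y \in x :: p -> connect r y (last x p).
Proof.
elim: p x y => [|z p IH] x y /=; first by rewrite inE => _ /eqP->.
move=> /andP[rxz pth]; rewrite inE => /orP[/eqP->|yin].
  apply: connect_trans (connect1 rxz) _; exact: (IH z z pth (mem_head _ _)).
exact: IH.
Qed.

Lemma circ_ge (V : finType) (e : rel V) (c : seq V) :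
  uniq c -> cycle e c -> size c <= circ e.
Proof.
move=> uc cc; rewrite /circ; apply: leq_trans (leq_maxr _ _).
have H : size c < #|V|.+1.
  by rewrite ltnS -(card_uniqP uc) max_card.
pose i0 := Ordinal H.
have -> : size c = nat_of_ord i0 by [].
apply: (@leq_bigmax_cond _ (fun k : 'I_#|V|.+1 => [exists t : k.-tuple V, uniq t && cycle e t]) (fun k => nat_of_ord k) i0).
by apply/existsP; exists (in_tuple c); rewrite /= uc cc.
Qed.

Lemma Xbound (V : finType) (e : rel V) (s : seq V) (v : V) (L : seq V) :
  sorted e (rcons L v) -> uniq L -> (forall y, y \in L -> index v s < index y s) ->
  (forall x, x \in Xs e s v -> x \in L) -> #|Xs e s v| <= circ e.
Proof.
set X := Xs e s v.
case: (boolP (has (mem X) L)) => hasX; last first.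
  move=> _ _ _ XL; rewrite (_ : X = set0) ?cards0 //; apply/setP => x.
  rewrite in_set0; apply: negbTE; apply/negP => xX.
  by move/hasPn: hasX => /(_ x (XL x xX)); rewrite /= xX.
move: hasX; case/split_find => x s1 s2 xX noh.
rewrite cat_rcons => srt uL Lidx XL.
have Xsub : forall y, y \in X -> y \in x :: s2.
  move=> y yX; move: (XL y yX); rewrite mem_cat => /orP[ys1|//].
  by move/hasPn: noh => /(_ y ys1); rewrite /= yX.
have pth2 : path e x (rcons s2 v).
  by move: srt; rewrite rcons_cat sorted_cat_cons => /andP[].
have Lx2 : forall z, z \in x :: s2 -> index v s < index z s.
  by move=> z zin; apply: Lidx; rewrite mem_cat zin orbT.
have ux2 : uniq (x :: s2) by move: uL; rewrite cat_uniq => /and3P[].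
have xX' : x \in Xs e s v := xX.
move: xX'; rewrite inE => /andP[/andP[xs ltvx] /existsP[w /andP[cw ewx]]].
move: cw ewx => /connectP[p pth ->].
case: (shortenP pth) => p' pth' uq _ ewx.
have p'idx := path_idx pth'.
pose c := v :: p' ++ x :: s2.
have uc : uniq c.
  rewrite /c cons_uniq mem_cat negb_or; move: uq; rewrite cons_uniq => /andP[-> up'].
  rewrite /=; apply/andP; split.
    by apply/negP => /Lx2; rewrite ltnn.
  rewrite cat_uniq up' ux2 andbT; apply/hasPn => z /Lx2 h; apply/negP => /p'idx.
  by rewrite leqNgt h.
have cc : cycle e c.
  rewrite /c /= rcons_cat rcons_cons cat_path /= ewx pth2 andbT.
  by rewrite andbT; apply: sub_path pth' => a b /andP[].
apply: leq_trans (circ_ge uc cc).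
have h1 : #|X| <= #|x :: s2|.
  by apply: subset_leq_card; apply/subsetP => y /Xsub.
apply: leq_trans h1 _; apply: leq_trans (card_size (x :: s2)) _.
rewrite /c /= size_cat /=; lia.
Qed.

Definition chainP (V : finType) (e : rel V) (s : seq V) (A : {set V}) (v : V) : Prop :=
  exists L : seq V, [/\ head v L \in A, sorted e (rcons L v), uniq L,
    (forall y, y \in L -> (y \in s) && (index v s < index y s)) &
    (forall x, x \in Xs e s v -> x \in L)].

Lemma idx_mem (V : eqType) (s : seq V) v z :
  v \in s -> index z s <= index v s -> z \in s.
Proof. by move=> vs h; rewrite -index_mem; apply: leq_ltn_trans h _; rewrite index_mem. Qed.

Lemma build (V : finType) (e : rel V) (n : nat) : forall (U A : {set V}),
  #|U| <= n ->
  (forall v, v \in U -> exists2 a, a \in A :&: U & connect [rel x y | e x y && (y \in U)] a v) ->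
  exists s : seq V, [/\ uniq s, (forall x, (x \in s) = (x \in U)) &
                       forall v, v \in s -> chainP e s A v].
Proof.
elim: n => [|n IHn] U A cardU hyp.
  exists [::]; split => // x; move: cardU; rewrite leqn0 => /eqP/cards0_eq ->.
  by rewrite inE.
case: (set_0Vmem U) => [-> | [v0 Uv0]].
  by exists [::]; split => // x; rewrite inE.
case: (hyp v0 Uv0) => r; rewrite inE => /andP[rA rU] _.
set eU := [rel x y | e x y && (y \in U)].
set R := [set y | connect eU r y].
have RU : forall y, y \in R -> y \in U.
  move=> y; rewrite inE; apply: (@conn_inv _ _ (mem U)) => //.
  by move=> a b _ /andP[].
have rR : r \in R by rewrite inE connect0.
have Rcl : forall y z, y \in R -> z \in U -> e y z -> z \in R.
  move=> y z; rewrite !inE => ry zU eyz; apply: connect_trans ry (connect1 _).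
  by rewrite /= eyz zU.
set U1 := R :\ r.
set A1 := [set y | e r y].
set U2 := U :\: R.
have cardUr : #|U :\ r| <= n by move: cardU; rewrite (cardsD1 r U) rU.
have c1 : #|U1| <= n.
  apply: leq_trans cardUr; apply: subset_leq_card; apply/subsetP => y.
  by rewrite !in_setD1 => /andP[-> yR]; exact: RU.
have c2 : #|U2| <= n.
  apply: leq_trans cardUr; apply: subset_leq_card; apply/subsetP => y.
  rewrite !inE => /andP[nyR ->]; rewrite andbT; apply/eqP => yr.
  by move: nyR; rewrite yr connect0.
have h1 : forall v, v \in U1 -> exists2 a, a \in A1 :&: U1 &
            connect [rel x y | e x y && (y \in U1)] a v.
  move=> v; rewrite !inE => /andP[vr /connectP[p pth vl]].
  move: vr; rewrite vl; case: (shortenP pth) => p' pth' uq _.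
  case: p' pth' uq => [|b p2] /=; first by rewrite eqxx.
  move=> /andP[/andP[erb bU] pth2] uq lr.
  have allR : forall z, z \in b :: p2 -> z \in U1.
    move=> z zin; rewrite in_setD1; apply/andP; split.
      by apply/eqP => zr; move: uq; rewrite -zr zin.
    have pf : path eU r (b :: p2) by rewrite /= erb bU pth2.
    have pc := path_connect pf.
    by rewrite inE; apply: pc; rewrite inE zin orbT.
  exists b; first by rewrite in_setI allR ?mem_head // andbT inE.
  apply/connectP; exists p2 => //.
  have := path_restrict (P := mem U1) pth2.
  have al : all (mem U1) p2 by apply/allP => z zin; apply: allR; rewrite inE zin orbT.
  move=> /(_ al); apply: sub_path => x y /= /andP[/andP[-> _] ->].
  by [].
have h2 : forall v, v \in U2 -> exists2 a, a \in A :&: U2 &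
            connect [rel x y | e x y && (y \in U2)] a v.
  move=> v; rewrite in_setD => /andP[vR vU].
  case: (hyp v vU) => a; rewrite inE => /andP[aA aU] /connectP[p pth vlast].
  have inU2 : forall z, z \in a :: p -> z \in U2.
    move=> z zin; rewrite in_setD.
    have -> : z \in U.
      have := path_connect pth zin; rewrite -/eU => cz.
      by apply: (@conn_inv _ _ (mem U) _ a) cz => // x y _ /andP[].
    rewrite andbT; apply/negP => zR.
    have := path_suffix pth zin; rewrite -vlast => czv.
    move: vR; apply/negP; rewrite negbK inE.
    by move: zR; rewrite inE => crz; apply: connect_trans crz czv.
  exists a; first by rewrite inE aA inU2 // mem_head.
  apply/connectP; exists p => //.
  have al : all (mem U2) p by apply/allP => z zin; apply: inU2; rewrite inE zin orbT.
  have := path_restrict (P := mem U2) pth al.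
  by apply: sub_path => x y /= /andP[/andP[-> _] ->].
have [s1 [us1 ms1 ch1]] := IHn U1 A1 c1 h1.
have [s2 [us2 ms2 ch2]] := IHn U2 A c2 h2.
have s1R : forall y, y \in s1 -> (y != r) && (y \in R).
  by move=> y; rewrite ms1 in_setD1.
have s2R : forall y, y \in s2 -> (y \notin R) && (y \in U).
  by move=> y; rewrite ms2 in_setD.
have r1 : r \notin s1 by apply/negP => /s1R; rewrite eqxx.
have r2 : r \notin s2 by apply/negP => /s2R; rewrite rR.
have s21 : forall y, y \in s2 -> y \notin s1.
  by move=> y /s2R /andP[yR _]; apply/negP => /s1R /andP[_ yR']; move: yR; rewrite yR'.
have s2r : forall y, y \in s2 -> y != r.
  by move=> y ys2; apply/eqP => yr; move: r2; rewrite -yr ys2.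
set s := s1 ++ r :: s2.
have ms : forall x, (x \in s) = (x \in U).
  move=> x; rewrite mem_cat inE; apply/idP/idP.
    case/orP => [/s1R /andP[_ /RU] // | /orP[/eqP -> // | /s2R /andP[_ ->] //]].
  move=> xU; case: (boolP (x \in R)) => xR.
    case: (eqVneq x r) => [->|xr]; first by rewrite orbT.
    by rewrite ms1 in_setD1 xr xR.
  by rewrite ms2 in_setD xR xU !orbT.
have us : uniq s.
  rewrite /s cat_uniq us1 cons_uniq r2 us2 /= andbT; apply/norP; split => //.
  by apply/hasPn => z /s21.
have i1 : forall y, y \in s1 -> index y s = index y s1.
  by move=> y ys1; rewrite /s index_cat ys1.
have ir : index r s = size s1.
  by rewrite /s index_cat (negbTE r1) /= ?eqxx ?addn0.
have i2 : forall y, y \notin s1 -> y != r -> index y s = size s1 + (index y s2).+1.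
  by move=> y ys1 yr; rewrite /s index_cat (negbTE ys1) /= eq_sym (negbTE yr) addnS.
have ge1 : forall y, y \notin s1 -> size s1 <= index y s.
  by move=> y ys1; rewrite /s index_cat (negbTE ys1) leq_addr.
have vsU : forall y, y \in s -> y \in U by move=> y; rewrite ms.
exists s; split => // v; rewrite mem_cat inE => /orP[vs1 | /orP[/eqP vr | vs2]].
- have [L [hA srt uL Lp Xs1]] := ch1 v vs1.
  exists (r :: L); split => //.
  + rewrite rcons_cons /=; move: hA srt; rewrite inE.
    by case: (L) => [|a Q] /= -> // ->.
  + rewrite cons_uniq uL andbT; apply/negP => rL.
    by have := Lp r rL; rewrite (negbTE r1).
  + move=> y; rewrite inE => /orP[/eqP-> | yL].
      by rewrite ms rU i1 // ir index_mem.
    by have /andP[ys1 lt] := Lp y yL; rewrite mem_cat ys1 /= !i1.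
  + move=> x; rewrite inE => /andP[/andP[xs lt] /existsP[w /andP[cw ewx]]].
    have cw1 : connect (lerel e s1 v) v w.
      apply: (@conn_inv _ _ (connect (lerel e s1 v) v) _ v) cw => // y z cy /andP[eyz le].
      have zs1 : z \in s1.
        apply/negPn/negP => zs1; have := leq_trans (ge1 z zs1) le.
        by rewrite i1 // leqNgt index_mem vs1.
      apply: connect_trans cy (connect1 _).
      by rewrite /lerel eyz -(i1 z zs1) -(i1 v vs1) le.
    have ws1 : w \in s1 by apply: idx_mem vs1 (lerel_idx cw1).
    move: (xs); rewrite mem_cat inE => /orP[xs1 | /orP[/eqP -> | xs2]].
    * rewrite inE; apply/orP; right; apply: Xs1.
      rewrite inE xs1 -(i1 x xs1) -(i1 v vs1) lt /=; apply/existsP; exists w.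
      by rewrite cw1 ewx.
    * by rewrite inE eqxx.
    * have := s2R x xs2; rewrite (Rcl w x) //.
        by have /andP[_ ->] := s1R w ws1.
      by have /andP[_ ->] := s2R x xs2.
- subst v; exists [::]; split => //; idtac.
  move=> x; rewrite inE => /andP[/andP[xs lt] /existsP[w /andP[cw ewx]]].
  have rs : r \in s by rewrite ms.
  have wR : w \in R.
    apply: (@conn_inv _ _ (mem R) _ r) cw => // y z yR /andP[eyz le].
    by apply: Rcl yR (vsU _ (idx_mem rs le)) eyz.
  have xR : x \in R by apply: Rcl wR (vsU _ xs) ewx.
  case: (boolP (x \in s1)) => xs1.
    by move: lt; rewrite ir i1 // ltnNge ltnW // index_mem.
  case: (eqVneq x r) => [xr | xr]; first by move: lt; rewrite xr ltnn.
  by move: xs1; rewrite ms1 in_setD1 xr xR.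
- have vs1 : v \notin s1 by apply: s21.
  have vr := s2r v vs2.
  have [L [hA srt uL Lp Xs2]] := ch2 v vs2.
  exists L; split => //.
  + move=> y yL; have /andP[ys2 lt] := Lp y yL.
    rewrite mem_cat inE ys2 !orbT /= !i2 ?s21 ?s2r //.
    by rewrite ltn_add2l ltnS.
  + move=> x; rewrite inE => /andP[/andP[xs lt] /existsP[w /andP[cw ewx]]].
    have vs : v \in s by rewrite mem_cat inE vs2 !orbT.
    have xs1 : x \notin s1.
      apply/negP => xs1; move: lt; rewrite (i1 x xs1) (i2 v vs1 vr).
      have h : index x s1 <= size s1 by apply: ltnW; rewrite index_mem.
      by rewrite ltnNge (leq_trans h (leq_addr _ _)).
    have xr : x != r.
      by apply/eqP => xr; move: lt; rewrite xr ir (i2 v vs1 vr) ltnNge leq_addr.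
    have xs2 : x \in s2 by move: xs; rewrite mem_cat inE (negbTE xs1) (negbTE xr).
    have Pw : (w \in R) || connect (lerel e s2 v) v w.
      apply: (@conn_inv _ _ (fun w => (w \in R) || connect (lerel e s2 v) v w) _ v) cw;
        last by rewrite connect0 orbT.
      move=> y z /orP[yR | cy] /andP[eyz le]; have zU := vsU _ (idx_mem vs le).
        by rewrite (Rcl y z).
      case: (boolP (z \in s2)) => zs2.
        apply/orP; right; apply: connect_trans cy (connect1 _).
        rewrite /lerel eyz /=; move: le; rewrite !i2 ?s21 ?s2r //.
        by rewrite leq_add2l ltnS.
      have : z \in s by apply: idx_mem vs le.
      rewrite mem_cat inE (negbTE zs2) orbF => /orP[/s1R /andP[_ ->] // | /eqP -> ].
      by rewrite rR.
    case/orP: Pw => [wR | cw2].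
      have := s2R x xs2; rewrite (Rcl w x) //.
      by have /andP[_ ->] := s2R x xs2.
    apply: Xs2; rewrite inE xs2 /=; apply/andP; split.
      by move: lt; rewrite !i2 // ltn_add2l ltnS.
    by apply/existsP; exists w; rewrite cw2 ewx.
Qed.

Theorem mainTheorem3 (V : finType) (e : rel V) (e_irr : irreflexive e) :
  kw_le e (circ e + 1).
Proof.
have hb : forall v, v \in [set: V] -> exists2 a, a \in [set: V] :&: [set: V] &
    connect [rel x y | e x y && (y \in [set: V])] a v.
  by move=> v _; exists v; rewrite ?inE // connect0.
have [s [us ms chs]] := @build V e #|V| setT setT (max_card _) hb.
have allS : forall v, v \in s by move=> v; rewrite ms inE.
pose C v := [set w | connect (lerel e s v) v w].
pose a := fun v w => (index w s < index v s) && connect (lerel e s v) v w.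
pose W := fun v : V => [set v].
pose X := Xs e s.
have inj : forall x y, index x s = index y s -> x = y.
  by move=> x y h; rewrite -(nth_index x (allS x)) h nth_index.
have Cle : forall v w, connect (lerel e s v) v w -> index w s <= index v s.
  by move=> v w; apply: lerel_idx.
have Ctrans : forall v w z, connect (lerel e s v) v w -> connect (lerel e s w) w z ->
    connect (lerel e s v) v z.
  move=> v w z cvw cwz; apply: (connect_trans cvw).
  apply: connect_sub cwz => y t /andP[eyt le]; apply: connect1.
  by rewrite /lerel eyt (leq_trans le (Cle _ _ cvw)).
have aconn : forall v k j, connect (lerel e s v) v k -> connect (fun x y => a x y) k j ->
    connect (lerel e s v) v j.
  move=> v k j cvk ckj.
  apply: (@conn_inv _ _ (connect (lerel e s v) v) _ k j cvk ckj).
  by move=> y z cy /andP[_ cyz]; apply: Ctrans cy cyz.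
have preqE : forall v k, dpreceq (fun x y => a x y) v k = connect (lerel e s v) v k.
  move=> v k; apply/idP/idP.
    case/orP => [/eqP <- | /existsP[k' /andP[/andP[_ cvk'] ck'k]]]; first exact: connect0.
    exact: aconn cvk' ck'k.
  move=> cvk; rewrite /dpreceq; case: (eqVneq v k) => //= vk.
  apply/existsP; exists k; rewrite connect0 andbT /a cvk andbT.
  by rewrite ltn_neqAle (Cle _ _ cvk) andbT; apply/eqP => /inj /esym /eqP; rewrite (negbTE vk).
have WsE : forall v, Wsucc (fun x y => a x y) W v = C v.
  move=> v; apply/setP => k; rewrite inE -preqE; apply/bigcupP/idP.
    by case=> j pj; rewrite inE => /eqP ->.
  by move=> pk; exists k => //; rewrite inE.
pose r := fun x y : V => index y s <= index x s.
have rtot : total r by move=> x y; apply: leq_total.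
have rtr : transitive r by move=> x y z h1 h2; apply: leq_trans h2 h1.
have sortsplit : forall (P : pred V) s1 j s2 x,
    sort r (filter P (enum V)) = s1 ++ j :: s2 -> P x -> index j s < index x s -> x \in s1.
  move=> P s1 j s2 x hs Px lt.
  have srt := sort_sorted rtot (filter P (enum V)); rewrite hs sorted_cat_cons in srt.
  have /allP al := order_path_min rtr (proj2 (andP srt)).
  have : x \in s1 ++ j :: s2 by rewrite -hs mem_sort mem_filter Px mem_enum.
  rewrite mem_cat inE => /orP[//|/orP[/eqP xj|xs2]]; first by move: lt; rewrite xj ltnn.
  by have := al x xs2; rewrite /r leqNgt lt.
have enumP : forall P : pred V, enumerates (sort r (filter P (enum V))) P.
  move=> P; split; first by rewrite sort_uniq filter_uniq // enum_uniq.
  by move=> j; rewrite mem_sort mem_filter mem_enum andbT.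
exists V, (fun x y => a x y), W, X; split; last first.
  apply/bigmax_leqP => i _.
  rewrite cardsU1 addnC; apply: leq_add; last exact: leq_b1.
  have [L [_ srt uL Lp XL]] := chs i (allS i).
  by apply: (Xbound srt uL) XL => y /Lp /andP[].
split.
- move=> i; apply/negP => /existsP[k /andP[/andP[lt _] cki]].
  have : index i s <= index k s.
    by apply: (@conn_inv _ _ (fun z => index z s <= index k s) _ k i (leqnn _) cki) => y z h /andP[h2 _]; apply: leq_trans (ltnW h2) h.
  by rewrite leqNgt lt.
- by split => [v|i j v]; [exists v; rewrite inE | rewrite !inE => /eqP -> /eqP ->].
- move=> i; rewrite WsE; split.
    rewrite disjoints_subset; apply/subsetP => x; rewrite !inE => cx.
    by rewrite negb_and negb_and -leqNgt Cle // orbT.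
  move=> u x eux; rewrite inE => cu; rewrite inE.
  case: (leqP (index x s) (index i s)) => le.
    by rewrite inE (connect_trans cu (connect1 _)) // /lerel eux le.
  apply/orP; right; rewrite /X /Xs inE allS le /=; apply/existsP; exists u.
  by rewrite cu eux.
- move=> i; exists (sort r (filter (a i) (enum V))); split; first exact: enumP.
  move=> s1 j s2 hs; apply/subsetP => x xX.
  have aij : a i j.
    have : j \in sort r (filter (a i) (enum V)) by rewrite hs mem_cat mem_head orbT.
    by rewrite mem_sort mem_filter mem_enum andbT.
  move: aij xX; rewrite /a /X inE => /andP[ltji cij] /andP[/andP[_ ltjx] /existsP[w /andP[cjw ewx]]].
  have ciw := Ctrans _ _ _ cij cjw.
  case: (leqP (index x s) (index i s)) => le.
    case: (eqVneq x i) => [-> | xi]; first by rewrite !inE eqxx.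
    have ltxi : index x s < index i s.
      by rewrite ltn_neqAle le andbT; apply/eqP => /inj /eqP; rewrite (negbTE xi).
    have cix : connect (lerel e s i) i x.
      by apply: connect_trans ciw (connect1 _); rewrite /lerel ewx le.
    have xs1 : x \in s1 by apply: sortsplit hs _ ltjx; rewrite /a ltxi cix.
    rewrite inE; apply/orP; right; rewrite bigcup_seq; apply/bigcupP; exists x => //.
    by rewrite WsE inE connect0.
  rewrite !inE; apply/orP; left; apply/orP; right.
  rewrite allS le /=; apply/existsP; exists w; by rewrite ciw ewx.
- exists (sort r (filter (is_root (fun x y => a x y)) (enum V))); split; first exact: enumP.
  move=> s1 j s2 hs; apply/subsetP => x xX.
  move: xX; rewrite /X inE => /andP[/andP[_ ltjx] _].
  case: (@arg_maxnP V x (fun m => connect (lerel e s m) m x) (fun m => index m s) (connect0 _ _)) => m cmx mmax.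
  have rootm : is_root (fun x y => a x y) m.
    apply/forallP => k; apply/negP => /andP[ltmk ckm].
    by have := mmax k (Ctrans _ _ _ ckm cmx); rewrite /= leqNgt ltmk.
  have lejm : index j s < index m s by apply: leq_trans ltjx (Cle _ _ cmx).
  have ms1 : m \in s1 by apply: sortsplit hs rootm lejm.
  rewrite bigcup_seq; apply/bigcupP; exists m => //.
  by rewrite WsE inE.
Qed.
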